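(* Assume that the following hold: (i) there exist positive finite constants $g_1,g_2$ such that for all large enough $r$, $\mathbb{E}[X_r]\in\mu r+[-g_1r^{1/3},-g_2r^{1/3}]$; (ii) there exist constants $\delta>0$, $C>0$, $r_1$ such that for all $r>r_1$, $\mathbb{P}(X_r-\mu r>Cr^{1/3})\ge\delta$. Then there exist constants $c>0$, $\eta>0$, $\theta_0$ and $r_0$ such that for all $r>r_0$ and $\theta_0<\theta<\eta r^{2/3}$, $$\mathbb{P}\left(X_r-\mathbb{E}[X_r]\ge\theta r^{1/3}\right)\ge\exp\left(-c\theta^{3/2}\right).$$
   Context: Let $\{\xi_v:v\in\mathbb{Z}^2\}$ be i.i.d. random variables with a common law $\nu$ supported on $[0,\infty)$. A directed path is an up-right nearest-neighbour path in $\mathbb{Z}^2$, and its weight is $\ell(\gamma)=\sum_{u\in\gamma}\xi_u$. For $u\preceq v$ coordinatewise, $X_{u,v}=\max_{\gamma:u\to v}\ell(\gamma)$ over directed paths from $u$ to $v$. For $r\in\mathbb{N}$, $X_r=X_{(1,1),(r,r)}$. It is assumed that $\mu=\lim_{r\to\infty}r^{-1}\mathbb{E}[X_r]<\infty$. *)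

(* Defs.v *)
From HB Require Import structures.
From mathcomp Require Import all_boot all_order all_algebra.
From mathcomp Require Import all_classical all_reals all_analysis.
Set Implicit Arguments. Unset Strict Implicit. Unset Printing Implicit Defensive.
Import Order.TTheory GRing.Theory Num.Theory.
Local Open Scope classical_set_scope.
Local Open Scope ring_scope.

(* A directed (up-right) path starting at (1,1) is
   encoded by its step sequence s : seq bool (false = step (1,0), true = step
   (0,1)). *)
Definition path_pt (s : seq bool) (k : nat) : int * int :=
  let t := take k s in
  (((1 + count negb t)%N)%:Z, ((1 + count id t)%N)%:Z).

Definition path_weight {T : Type} {R : realType} (xi : int * int -> T -> R)
  (s : seq bool) (w : T) : R :=
  \sum_(k < (size s).+1) xi (path_pt s k) w.

(* X_r = X_{(1,1),(r,r)}: maximum over all directed paths from (1,1) to (r,r),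
   i.e. over step sequences of length 2(r-1) with exactly r-1 up-steps.
   (The seed of the big max is itself one such path, so this is an honest max.) *)
Definition LPP {T : Type} {R : realType} (xi : int * int -> T -> R)
  (r : nat) (w : T) : R :=
  \big[Num.max/path_weight xi (nseq r.-1 false ++ nseq r.-1 true) w]_(s : (r.-1 + r.-1).-tuple bool | count id s == r.-1)
    path_weight xi s w.

Definition mutually_independent {d} {T : measurableType d} {R : realType}
  (P : probability T R) {I : eqType} (X : I -> T -> R) : Prop :=
  forall (s : seq I) (B : I -> set R), uniq s ->
    (forall i, measurable (B i)) ->
    P (\bigcap_(i in [set` s]) (X i @^-1` B i)) =
      (\prod_(i <- s) P (X i @^-1` B i))%E.

(* Main.v *)
Require Import Defs.
From HB Require Import structures.
From mathcomp Require Import all_boot all_order all_algebra.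
From mathcomp Require Import all_classical all_reals all_analysis.
From mathcomp Require Import zify ring lra.
Import Order.TTheory GRing.Theory Num.Theory.
Local Open Scope classical_set_scope.
Local Open Scope ring_scope.
Set Implicit Arguments. Unset Strict Implicit. Unset Printing Implicit Defensive.

Section Comb.
Variables (T : Type) (R : realType).
Implicit Types (xi : int * int -> T -> R) (s : seq bool).

Definition vadd (v a : int * int) : int * int := (v.1 + a.1, v.2 + a.2).
Definition sh (a : int * int) xi := fun v w => xi (vadd v a) w.
Definition endv s : int * int := ((count negb s)%:Z, (count id s)%:Z).
Definition TW xi s w := \sum_(k < size s) xi (path_pt s k.+1) w.

Lemma pt0 s : path_pt s 0 = (1%:Z, 1%:Z).
Proof. by rewrite /path_pt take0. Qed.

Lemma PW_TW xi s w : path_weight xi s w = xi (1%:Z, 1%:Z) w + TW xi s w.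
Proof. by rewrite /path_weight big_ord_recl /= pt0. Qed.

Lemma pt_cat_l s1 s2 k : (k <= size s1)%N -> path_pt (s1 ++ s2) k = path_pt s1 k.
Proof. by move=> h; rewrite /path_pt takel_cat. Qed.

Lemma pt_cat_r s1 s2 i :
  path_pt (s1 ++ s2) (size s1 + i) = vadd (path_pt s2 i) (endv s1).
Proof.
rewrite /path_pt /vadd /endv take_cat ltnNge leq_addr /= addKn !count_cat.
by congr (_, _); rewrite -!PoszD; congr Posz; lia.
Qed.

Lemma TW_cat xi s1 s2 w :
  TW xi (s1 ++ s2) w = TW xi s1 w + TW (sh (endv s1) xi) s2 w.
Proof.
rewrite /TW size_cat big_split_ord /=; congr (_ + _).
  by apply: eq_bigr => i _; rewrite pt_cat_l.
by apply: eq_bigr => i _; rewrite /sh -pt_cat_r addnS.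
Qed.

Lemma TW_ge0 xi s w : (forall v, 0 <= xi v w) -> 0 <= TW xi s w.
Proof. by move=> h; apply: sumr_ge0 => i _. Qed.


Definition cs (S : nat -> seq bool) k := flatten [seq S j ++ [:: false; true] | j <- iota 0 k].

Lemma cs_S S k : cs S k.+1 = cs S k ++ (S k ++ [:: false; true]).
Proof. by rewrite /cs -addn1 iotaD map_cat flatten_cat /= cats0. Qed.

Lemma endv_cs S m k : (forall j, count id (S j) = m.-1 /\ count negb (S j) = m.-1) ->
  (0 < m)%N -> endv (cs S k) = ((k * m)%:Z, (k * m)%:Z).
Proof.
move=> hS m0; elim: k => [|k IH]; first by [].
rewrite cs_S /endv !count_cat /=; have [h1 h2] := hS k.
move: IH; rewrite /endv => -[e1 e2].
have e1' : count negb (cs S k) = (k * m)%N by case: e1.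
have e2' : count id (cs S k) = (k * m)%N by case: e2.
rewrite h1 h2 e1' e2'; congr (_, _); congr Posz; lia.
Qed.

Definition aj (m j : nat) : int * int := ((j * m)%:Z, (j * m)%:Z).

Lemma block_ineq xi (S : nat -> seq bool) m k w : (forall j, count id (S j) = m.-1 /\ count negb (S j) = m.-1) ->
  (0 < m)%N -> (forall v, 0 <= xi v w) ->
  \sum_(j < k) path_weight (sh (aj m j) xi) (S j) w + xi (vadd (1%:Z, 1%:Z) (aj m k)) w
    <= path_weight xi (cs S k) w.
Proof.
move=> hS m0 h0; elim: k => [|k IH].
  by rewrite big_ord0 add0r /cs /= /path_weight big_ord1 pt0 /vadd /aj /= !addr0.
rewrite cs_S PW_TW TW_cat addrA -PW_TW (endv_cs _ hS m0) TW_cat.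
rewrite big_ord_recr /= -addrA; apply: (le_trans _ (lerD IH (lexx _))).
rewrite -!addrA lerD2l PW_TW.
have -> : vadd (1%:Z, 1%:Z) (aj m k) = ((1 + (k * m)%:Z), (1 + (k * m)%:Z)) by [].
rewrite /sh -addrA lerD2l lerD2l /TW /= big_ord_recr big_ord1 /=.
rewrite -[X in X <= _]add0r; apply: lerD; first exact: h0.
rewrite le_eqVlt; apply/orP; left; apply/eqP; congr xi.
rewrite /vadd /path_pt /aj /endv /= (proj1 (hS k)) (proj2 (hS k)).
congr (_, _); rewrite -!PoszD; congr Posz; lia.
Qed.

Lemma LPP_ge xi r w (s : seq bool) : size s = (r.-1 + r.-1)%N -> count id s = r.-1 ->
  path_weight xi s w <= LPP xi r w.
Proof.
move=> hs hc; have hs' : size s == (r.-1 + r.-1)%N by apply/eqP.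
rewrite /LPP; apply: (bigmax_sup (Tuple hs')) => //=; by apply/eqP.
Qed.

Lemma LPP_att xi r w : exists s : seq bool, [/\ size s = (r.-1 + r.-1)%N, count id s = r.-1 &
  LPP xi r w = path_weight xi s w].
Proof.
rewrite /LPP; apply: (big_ind (fun y => exists s : seq bool, [/\ size s = (r.-1 + r.-1)%N, count id s = r.-1 &
  y = path_weight xi s w])).
- exists (nseq r.-1 false ++ nseq r.-1 true); split => //.
  + by rewrite size_cat !size_nseq.
  + by rewrite count_cat !count_nseq /= mul0n mul1n.
- move=> x y [s1 [h1 h2 ->]] [s2 [h3 h4 ->]].
  by case: (leP (path_weight xi s1 w) (path_weight xi s2 w)) => _; [exists s2|exists s1].
- move=> i /eqP hi; exists (tval i); split => //; exact: size_tuple.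
Qed.

Lemma count_take_le (p : pred bool) k s : (count p (take k s) <= count p s)%N.
Proof. by rewrite -{2}(cat_take_drop k s) count_cat leq_addr. Qed.

Lemma LPP_ext {T' : Type} xi (g : int * int -> T' -> R) r w w' : (0 < r)%N ->
  (forall a b, (a < r)%N -> (b < r)%N -> xi ((a.+1)%:Z, (b.+1)%:Z) w = g ((a.+1)%:Z, (b.+1)%:Z) w') ->
  LPP xi r w = LPP g r w'.
Proof.
move=> r0 h.
have key : forall s : seq bool, size s = (r.-1 + r.-1)%N -> count id s = r.-1 ->
  path_weight xi s w = path_weight g s w'.
  move=> s hs hc; apply: eq_bigr => k _; rewrite /path_pt.
  have hn : count negb s = r.-1.
    have := count_predC id s; rewrite hs hc => e.
    have : count (predC id) s = r.-1 by lia.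
    by [].
  apply: h.
  - have := count_take_le negb k s; rewrite hn; lia.
  - have := count_take_le id k s; rewrite hc; lia.
rewrite /LPP key; first last.
- by rewrite count_cat !count_nseq /= mul0n mul1n.
- by rewrite size_cat !size_nseq.
apply: eq_bigr => i /eqP hi; apply: key => //; exact: size_tuple.
Qed.

Lemma size_cs (S : nat -> seq bool) m k : (forall j, size (S j) = (m.-1 + m.-1)%N) -> (0 < m)%N ->
  size (cs S k) = (k * (m + m))%N.
Proof.
move=> hS m0; elim: k => [|k IH] //; rewrite cs_S !size_cat IH hS /=; lia.
Qed.

Lemma LPP_blocks xi (m k r : nat) w : (0 < m)%N -> (k * m < r)%N -> (forall v, 0 <= xi v w) ->
  \sum_(j < k) LPP (sh (aj m j) xi) m w <= LPP xi r w.
Proof.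
move=> m0 kmr h0.
have [S hS] := boolp.choice (fun j => LPP_att (sh (aj m j) xi) m w).
have hS' : forall j, count id (S j) = m.-1 /\ count negb (S j) = m.-1.
  move=> j; have [h1 h2 _] := hS j; split => //.
  have := count_predC id (S j); rewrite h1 h2 => e.
  have : count (predC id) (S j) = m.-1 by lia.
  by [].
set q := (r.-1 - k * m)%N.
set c := cs S k ++ (nseq q false ++ nseq q true).
have hsz : size c = (r.-1 + r.-1)%N.
  rewrite /c size_cat (size_cs _ _ m0) ?size_cat ?size_nseq /q; first lia.
  by move=> j; case: (hS j).
have hct : count id c = r.-1.
  have := endv_cs k hS' m0; rewrite /endv => -[_ e].
  rewrite /c !count_cat e count_nseq count_nseq /= mul0n mul1n /q; lia.
apply: (le_trans _ (LPP_ge xi w hsz hct)).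
rewrite /c PW_TW TW_cat addrA -PW_TW.
have := TW_ge0 (xi := sh (endv (cs S k)) xi) (nseq q false ++ nseq q true) (w:=w) (fun v => h0 _).
move/(lerD (block_ineq k hS' m0 h0)) => H; apply: (le_trans _ H).
rewrite -[X in X <= _]addr0 -addrA; apply: lerD.
  by apply: ler_sum => j _; case: (hS j) => _ _ ->.
by rewrite addr0; exact: h0.
Qed.
End Comb.
Section Meas.
Context d' (T' : measurableType d') (R : realType).

Lemma bigmax_meas (I : Type) (l : seq I) (p : pred I) (F : I -> T' -> R) (x0 : T' -> R) :
  measurable_fun setT x0 -> (forall i, measurable_fun setT (F i)) ->
  measurable_fun setT (fun w => \big[Num.max/x0 w]_(i <- l | p i) F i w).
Proof.
move=> m0 mF; elim: l => [|i l IH].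
  by under eq_fun do rewrite big_nil.
under eq_fun do rewrite big_cons.
case: (p i) => //.
exact: measurable_realfun.measurable_maxr.
Qed.

Lemma PW_meas (f : int * int -> T' -> R) s :
  (forall v, measurable_fun setT (f v)) -> measurable_fun setT (path_weight f s).
Proof.
move=> mf; rewrite /path_weight.
exact: measurable_sum.
Qed.

Lemma LPP_meas (f : int * int -> T' -> R) r :
  (forall v, measurable_fun setT (f v)) -> measurable_fun setT (LPP f r).
Proof.
move=> mf; rewrite /LPP; apply: bigmax_meas => *; exact: PW_meas.
Qed.
End Meas.
Section Tup.
Context (R : realType) (n : nat).

Definition box (B : 'I_n -> set R) : set (n.-tuple R) := [set x | forall i, B i (tnth x i)].
Definition Boxes : set (set (n.-tuple R)) :=
  [set X | exists B : 'I_n -> set R, (forall i, measurable (B i)) /\ X = box B].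

Lemma box_meas B : (forall i, measurable (B i)) -> measurable (box B).
Proof.
move=> mB.
have -> : box B = \big[setI/setT]_(i < n) ((tnth (T:=R))^~ i @^-1` B i).
  apply/seteqP; split => x.
    by move=> hx; rewrite -bigcap_seq => i _; exact: hx.
  by rewrite -bigcap_seq => hx i; apply: hx; rewrite /= mem_index_enum.
apply: big_ind => //; first by move=> *; exact: measurableI.
move=> i _; rewrite -[X in measurable X]setTI; exact: measurable_tnth.
Qed.

Lemma tuple_measE : @measurable _ (n.-tuple R) = <<s Boxes >>.
Proof.
apply/seteqP; split.
  apply: smallest_sub; first exact: smallest_sigma_algebra.
  move=> X; rewrite -bigcup_seq => -[i _ [A mA <-]].
  apply: sub_gen_smallest; exists (fun j => if j == i then A else setT); split.
    by move=> j; case: ifP.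
  apply/seteqP; split => x /=.
    by move=> [_ hx] j; case: ifP => // /eqP ->.
  by move=> /(_ i); rewrite eqxx.
apply: smallest_sub; first exact: sigma_algebra_measurable.
by move=> X [B [mB ->]]; exact: box_meas.
Qed.

Lemma Boxes_setI : setI_closed Boxes.
Proof.
move=> X Y [B1 [m1 ->]] [B2 [m2 ->]]; exists (fun i => B1 i `&` B2 i); split.
  by move=> i; exact: measurableI.
by apply/seteqP; split => x /=; [move=> [h1 h2] i; split|move=> h; split => i; case: (h i)].
Qed.

Lemma Boxes_T : Boxes setT.
Proof. by exists (fun=> setT); split => //; apply/seteqP; split. Qed.

End Tup.
Section Dyn.
Context d (T : measurableType d) (R : realType) (P : probability T R).

Lemma PE (A : set T) : measurable A -> P A = (fine (P A))%:E.
Proof. by move=> mA; rewrite fineK // fin_num_measure. Qed.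

Lemma PD (X F : set T) : measurable X -> measurable F -> P (X `\` F) = (P X - P (X `&` F))%E.
Proof.
move=> mX mF; apply: measureD => //.
apply: (le_lt_trans (probability_le1 P mX)); exact: ltry.
Qed.

Lemma PU (G : (set T)^nat) : (forall i, measurable (G i)) -> trivIset setT G ->
  P (\bigcup_k G k) = (\sum_(0 <= i <oo | i \in setT) P (G i))%E.
Proof. move=> mG tG; exact: measure_bigcup. Qed.

Definition Hc (X : set T) := [set F : set T | measurable F /\ P (F `&` X) = (P F * P X)%E].

Lemma dynkin_Hc X : measurable X -> dynkin (Hc X).
Proof.
move=> mX; split.
- by split => //; rewrite setTI probability_setT mul1e.
- move=> F [mF hF]; split; first exact: measurableC.
  rewrite probability_setC // setIC -setDE PD //.
  rewrite setIC hF (PE mX) (PE mF) -EFinM -!EFinB -EFinM; congr EFin; ring.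
- move=> F tF hF; split.
    by apply: bigcup_measurable => k _; case: (hF k).
  rewrite setI_bigcupl PU; last first.
  + exact: trivIset_setIr.
  + by move=> i; apply: measurableI => //; case: (hF i).
  rewrite PU //; last by move=> i; case: (hF i).
  rewrite (eq_eseriesr (g := fun k => (P X * P (F k))%E)); last first.
    by move=> i _; case: (hF i) => _ ->; rewrite muleC.
  rewrite (PE mX) nneseriesZl; first by rewrite muleC.
  by move=> i _.
Qed.


Section Prob.
Variables (nu : probability R R) (xi : int * int -> T -> R).
Hypotheses (mxi : forall v, measurable_fun setT (xi v))
  (ind : mutually_independent P xi)
  (law : forall v (B : set R), measurable B -> P (xi v @^-1` B) = nu B).

Lemma prodF (s : seq (int * int)) (B : int * int -> set R) : uniq s ->
  (forall v, measurable (B v)) ->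
  P (\bigcap_(v in [set` s]) xi v @^-1` B v) = (\prod_(v <- s) nu (B v))%E.
Proof.
move=> us mB; rewrite ind //; apply: eq_bigr => v _; exact: law.
Qed.

Lemma pre_meas v (B : set R) : measurable B -> measurable (xi v @^-1` B).
Proof. move=> mB; rewrite -[X in measurable X]setTI; exact: mxi. Qed.

Lemma bigcap_meas (s : seq (int * int)) (B : int * int -> set R) :
  (forall v, measurable (B v)) -> measurable (\bigcap_(v in [set` s]) xi v @^-1` B v).
Proof.
move=> mB; rewrite bigcap_seq; apply: big_ind => //.
- by move=> *; exact: measurableI.
- by move=> v _; exact: pre_meas.
Qed.

Definition Pi (D : set (int * int)) := [set F : set T | exists s (B : int * int -> set R),
  [/\ uniq s, (forall v, v \in s -> D v), (forall v, measurable (B v)) &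
      F = \bigcap_(v in [set` s]) xi v @^-1` B v]].

Definition sig D := <<s Pi D >>.

Lemma Pi_setI D : setI_closed (Pi D).
Proof.
move=> F1 F2 [s1 [B1 [u1 D1 m1 ->]]] [s2 [B2 [u2 D2 m2 ->]]].
exists (undup (s1 ++ s2)), (fun v => (if v \in s1 then B1 v else setT) `&` (if v \in s2 then B2 v else setT)).
split.
- exact: undup_uniq.
- by move=> v; rewrite mem_undup mem_cat => /orP[/D1|/D2].
- by move=> v; apply: measurableI; case: ifP.
apply/seteqP; split => w.
- move=> [h1 h2] v /=; rewrite mem_undup mem_cat => hv; split.
    by case: ifP => // vs1; exact: h1.
  by case: ifP => // vs2; exact: h2.
- move=> h; split => v /= hv.
    by have := h v; rewrite /= mem_undup mem_cat hv /= => /(_ isT) [+ _].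
  by have := h v; rewrite /= mem_undup mem_cat hv orbT => /(_ isT) [_].
Qed.

Lemma Pi_meas D : Pi D `<=` measurable.
Proof. by move=> F [s [B [_ _ mB ->]]]; exact: bigcap_meas. Qed.

Lemma sig_meas D : sig D `<=` measurable.
Proof. apply: smallest_sub; [exact: sigma_algebra_measurable|exact: Pi_meas]. Qed.

Lemma sig_mono (D D' : set (int * int)) : D `<=` D' -> sig D `<=` sig D'.
Proof.
move=> DD'; apply: smallest_sub; first exact: smallest_sigma_algebra.
move=> F [s [B [u hD mB ->]]]; apply: sub_gen_smallest.
by exists s, B; split => // v /hD /DD'.
Qed.

Lemma sig_setI D A B : sig D A -> sig D B -> sig D (A `&` B).
Proof.
move=> hA hB.
have -> : A `&` B = ~` (\bigcup_i bigcup2 (~` A) (~` B) i).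
  by rewrite bigcup2E setCU !setCK.
apply: sigma_algebraC; apply: sigma_algebra_bigcup => -[|[|i]] /=.
- exact: sigma_algebraC.
- exact: sigma_algebraC.
- exact: sigma_algebra0.
Qed.

Lemma indep (D1 D2 : set (int * int)) (F1 F2 : set T) :
  (forall v, D1 v -> D2 v -> False) -> sig D1 F1 -> sig D2 F2 ->
  P (F1 `&` F2) = (P F1 * P F2)%E.
Proof.
move=> disj h1 h2.
have step1 : forall G1 G2, Pi D1 G1 -> Pi D2 G2 -> P (G1 `&` G2) = (P G1 * P G2)%E.
  move=> _ _ [s1 [B1 [u1 hD1 m1 ->]]] [s2 [B2 [u2 hD2 m2 ->]]].
  have u12 : uniq (s1 ++ s2).
    rewrite cat_uniq u1 u2 /= andbT; apply/hasPn => v /hD2 v2; apply/negP => /hD1 v1.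
    exact: (disj v).
  have -> : (\bigcap_(v in [set` s1]) xi v @^-1` B1 v) `&` (\bigcap_(v in [set` s2]) xi v @^-1` B2 v)
    = \bigcap_(v in [set` s1 ++ s2]) xi v @^-1` (if v \in s1 then B1 v else B2 v).
    apply/seteqP; split => w.
    - move=> [ha hb] v /=; rewrite mem_cat; case: ifP => [vs1 _|vs1 /= vs2].
        exact: ha.
      exact: hb.
    - move=> h; split => v /= hv.
        by have := h v; rewrite /= mem_cat hv /= => /(_ isT).
      have nv1 : v \in s1 = false.
        by apply/negP => /hD1 v1; exact: (disj v v1 (hD2 _ hv)).
      by have := h v; rewrite /= mem_cat hv orbT => /(_ isT); rewrite nv1.
  rewrite !prodF //; last by move=> v; case: ifP.
  rewrite big_cat /=; congr (_ * _)%E.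
    by rewrite big_seq_cond [RHS]big_seq_cond; apply: eq_bigr => v /andP[-> _].
  rewrite big_seq_cond [RHS]big_seq_cond; apply: eq_bigr => v /andP[hv _].
  have nv1 : v \in s1 = false.
    by apply/negP => /hD1 v1; exact: (disj v v1 (hD2 _ hv)).
  by rewrite nv1.
have step2 : forall G2, Pi D2 G2 -> forall G1, sig D1 G1 -> P (G1 `&` G2) = (P G1 * P G2)%E.
  move=> G2 hG2 G1 hG1.
  suff : Hc G2 G1 by case.
  move: G1 hG1; rewrite /sig -setI_closed_g_dynkin_g_sigma_algebra; last exact: Pi_setI.
  apply: smallest_sub; first by apply: dynkin_Hc; exact: (@Pi_meas D2 _ hG2).
  move=> G1 hG1; split; first exact: (@Pi_meas D1 _ hG1).
  exact: step1.
suff : Hc F1 F2 by case=> _; rewrite setIC => ->; rewrite muleC.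
move: F2 h2; rewrite /sig -setI_closed_g_dynkin_g_sigma_algebra; last exact: Pi_setI.
apply: smallest_sub; first by apply: dynkin_Hc; exact: (@sig_meas D1 _ h1).
move=> G2 hG2; split; first exact: (@Pi_meas D2 _ hG2).
by rewrite setIC step2 // muleC.
Qed.


Section Vec.
Variable n : nat.
Implicit Types (L : n.-tuple (int * int)).

Definition V L (w : T) : n.-tuple R := [tuple xi (tnth L i) w | i < n].

Lemma V_meas L : measurable_fun setT (V L).
Proof.
apply/measurable_fun_tnthP => i.
rewrite /comp /= (_ : (fun x => tnth (V L x) i) = xi (tnth L i)) //.
by apply/funext => w; rewrite /V tnth_mktuple.
Qed.

Lemma Vpre_meas L G : measurable G -> measurable (V L @^-1` G).
Proof. move=> mG; rewrite -[X in measurable X]setTI; exact: V_meas. Qed.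

Definition Bx L (B : 'I_n -> set R) (v : int * int) : set R :=
  oapp B setT (insub (index v L)).

Lemma Bx_tnth L B i : uniq L -> Bx L B (tnth L i) = B i.
Proof.
move=> uL; rewrite /Bx.
have -> : index (tnth L i) L = i.
  by rewrite (tnth_nth (0%:Z, 0%:Z)) index_uniq // size_tuple.
by rewrite valK.
Qed.

Lemma Bx_meas L B : (forall i, measurable (B i)) -> forall v, measurable (Bx L B v).
Proof. by move=> mB v; rewrite /Bx; case: (insub _) => [i|] /=. Qed.

Lemma Vbox L B : uniq L ->
  V L @^-1` box B = \bigcap_(v in [set` L]) xi v @^-1` Bx L B v.
Proof.
move=> uL; apply/seteqP; split => w.
- move=> h v /= /tnthP [i ->]; rewrite Bx_tnth //.
  by have := h i; rewrite /= tnth_mktuple.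
- move=> h i /=; rewrite tnth_mktuple -(Bx_tnth B i uL); apply: h.
  by rewrite /= mem_tnth.
Qed.

Lemma P_Vbox L B : uniq L -> (forall i, measurable (B i)) ->
  P (V L @^-1` box B) = (\prod_(i < n) nu (B i))%E.
Proof.
move=> uL mB; rewrite Vbox // prodF //; last exact: Bx_meas.
rewrite big_tuple; apply: eq_bigr => i _; by rewrite Bx_tnth.
Qed.

Lemma joint L L' : uniq L -> uniq L' -> forall G, measurable G ->
  P (V L @^-1` G) = P (V L' @^-1` G).
Proof.
move=> uL uL' G mG.
pose Q := [set G : set (n.-tuple R) | P (V L @^-1` G) = P (V L' @^-1` G)].
have QT : Q setT by rewrite /Q /= !preimage_setT.
have GQ : @Boxes R n `<=` Q by move=> X [B [mB ->]]; rewrite /Q /= !P_Vbox.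
have QC : forall S, measurable S -> Q S -> Q (~` S).
  move=> S mS; rewrite /Q /= => hS.
  have m1 := Vpre_meas L mS; have m2 := Vpre_meas L' mS.
  have e1 : V L @^-1` (~` S) = ~` (V L @^-1` S) by [].
  have e2 : V L' @^-1` (~` S) = ~` (V L' @^-1` S) by [].
  rewrite e1 e2 (probability_setC P m1) (probability_setC P m2).
  by rewrite hS.
have QU : forall F : (set (n.-tuple R))^nat, (forall i, measurable (F i)) ->
    trivIset setT F -> (forall i, Q (F i)) -> Q (\bigcup_k F k).
  move=> F mF tF hF; rewrite /Q /= !preimage_bigcup.
  have tr : forall L0, trivIset setT (fun k => V L0 @^-1` F k).
    move=> L0; apply/trivIsetP => i j _ _ ij; rewrite -preimage_setI.
    by move/trivIsetP: tF => /(_ i j Logic.I Logic.I ij) ->; rewrite preimage_set0.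
  rewrite !PU //; try by move=> i; exact: Vpre_meas.
  by apply: eq_eseriesr => i _; exact: hF.
have := @dynkin_induction _ (n.-tuple R) (@Boxes R n) Q (@tuple_measE R n) (@Boxes_setI R n) QT GQ QC QU.
by apply; rewrite -tuple_measE.
Qed.

Lemma V_sig L (D : set (int * int)) : uniq L -> (forall i, D (tnth L i)) ->
  forall G, measurable G -> sig D (V L @^-1` G).
Proof.
move=> uL hD G; rewrite tuple_measE; move: G.
have : sigma_algebra setT [set G | sig D (V L @^-1` G)].
  split.
  - by rewrite /= preimage_set0; exact: sigma_algebra0.
  - move=> A /= hA.
    have -> : V L @^-1` (setT `\` A) = setT `\` (V L @^-1` A) by [].
    exact: sigma_algebraCD.
  - by move=> F hF; rewrite /= preimage_bigcup; exact: sigma_algebra_bigcup.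
move=> sa; apply: smallest_sub => // X [B [mB ->]].
rewrite /= Vbox //; apply: sub_gen_smallest; exists (tval L), (Bx L B); split => //.
- by move=> v /tnthP [i ->].
- exact: Bx_meas.
Qed.

End Vec.

Lemma measurable_gt (c : R) : measurable [set x : R | c < x].
Proof.
have -> : [set x : R | c < x] = [set` `]c, +oo[] by apply/seteqP; split => x; rewrite /= in_itv /= andbT.
exact: measurable_itv.
Qed.

Lemma measurable_lt0 : measurable [set x : R | x < 0].
Proof.
have -> : [set x : R | x < 0] = [set` `]-oo, 0[] by apply/seteqP; split => x; rewrite /= in_itv.
exact: measurable_itv.
Qed.

Section Main.
Variable m : nat.
Hypothesis m0 : (0 < m)%N.

Definition L0 := [seq ((a.+1)%:Z, (b.+1)%:Z) | a <- iota 0 m, b <- iota 0 m].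

Lemma L0_uniq : uniq L0.
Proof.
apply: allpairs_uniq; try exact: iota_uniq.
move=> [a b] [a' b'] _ _ /= [e1 e2]; congr pair; lia.
Qed.

Lemma L0_mem a b : (a < m)%N -> (b < m)%N -> ((a.+1)%:Z, (b.+1)%:Z) \in L0.
Proof. by move=> ha hb; apply/allpairsP; exists (a, b); rewrite !mem_iota /= ha hb. Qed.

Lemma L0_in v : v \in L0 -> exists a b, [/\ (a < m)%N, (b < m)%N & v = ((a.+1)%:Z, (b.+1)%:Z)].
Proof. by move=> /allpairsP [[a b] [ha hb ->]]; exists a, b; move: ha hb; rewrite !mem_iota. Qed.

Definition nn := size L0.

Definition Lt (j : nat) : nn.-tuple (int * int) := map_tuple (fun v => vadd v (aj m j)) (in_tuple L0).

Lemma Lt_uniq j : uniq (Lt j).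
Proof.
rewrite map_inj_uniq; first exact: L0_uniq.
by move=> [a b] [a' b'] [e1 e2]; congr pair; [move/addIr: e1|move/addIr: e2].
Qed.

Lemma Lt_sites j i : ((j * m)%:Z < (tnth (Lt j) i).1) && ((tnth (Lt j) i).1 <= ((j.+1 * m)%N)%:Z).
Proof.
rewrite tnth_map; have := mem_tnth i (in_tuple L0) => /L0_in [a [b [ha hb ->]]].
rewrite /vadd /aj /=; apply/andP; split; lia.
Qed.

Definition tenv (v : int * int) (x : nn.-tuple R) : R :=
  oapp (fun i => tnth x i) 0 (insub (index v L0) : option 'I_nn).

Definition Phi (x : nn.-tuple R) : R := LPP tenv m x.

Lemma Phi_meas : measurable_fun setT Phi.
Proof.
apply: LPP_meas => v; rewrite /tenv; case: (insub _) => [i|] /=.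
  exact: measurable_tnth.
exact: measurable_cst.
Qed.

Lemma Phi_V j w : Phi (V (Lt j) w) = LPP (sh (aj m j) xi) m w.
Proof.
rewrite /Phi; apply: LPP_ext => // a b ha hb.
have hm := L0_mem ha hb.
have hi : (index ((a.+1)%:Z, (b.+1)%:Z) L0 < nn)%N by rewrite index_mem.
rewrite /tenv (insubT (fun k => k < nn)%N hi) /= /V tnth_mktuple tnth_map /sh.
congr (xi (vadd _ _) w).
by rewrite (tnth_nth (0%:Z, 0%:Z)) /= nth_index.
Qed.


Lemma LPP_sh0 w : LPP (sh (aj m 0) xi) m w = LPP xi m w.
Proof.
apply: LPP_ext => // a b _ _; by rewrite /sh /vadd /aj /= !addr0.
Qed.

Variable c : R.
Definition Gm := [set x : nn.-tuple R | c < Phi x].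

Lemma Gm_meas : measurable Gm.
Proof.
have -> : Gm = setT `&` Phi @^-1` [set x | c < x] by apply/seteqP; split => x //= [].
exact: (Phi_meas measurableT (measurable_gt c)).
Qed.

Definition A j := V (Lt j) @^-1` Gm.

Lemma A_prob j : P (A j) = P [set w | c < LPP xi m w].
Proof.
rewrite /A (joint (Lt_uniq j) (Lt_uniq 0) Gm_meas); congr (P _).
by apply/seteqP; split => w; rewrite /preimage /Gm /= Phi_V LPP_sh0.
Qed.

Definition Dle (K : nat) := [set v : int * int | v.1 <= K%:Z].
Definition Dgt (K : nat) := [set v : int * int | K%:Z < v.1].

Definition Q k := \big[setI/setT]_(j < k) A j.

Lemma sig_T D : sig D setT.
Proof. rewrite -setC0; apply: sigma_algebraC; exact: sigma_algebra0. Qed.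

Lemma Q_bound (delta : R) : 0 <= delta -> (delta%:E <= P [set w | (c < LPP xi m w)%R])%E ->
  forall k, sig (Dle (k * m)) (Q k) /\ ((delta ^+ k)%:E <= P (Q k))%E.
Proof.
move=> d0 hd; elim => [|k [IH1 IH2]].
  by rewrite /Q big_ord0 probability_setT expr0; split => //; exact: sig_T.
have hA1 : sig (Dgt (k * m)) (A k).
  apply: V_sig; [exact: Lt_uniq| |exact: Gm_meas].
  by move=> i; have /andP[h _] := Lt_sites k i.
have hA2 : sig (Dle (k.+1 * m)) (A k).
  apply: V_sig; [exact: Lt_uniq| |exact: Gm_meas].
  by move=> i; have /andP[_ h] := Lt_sites k i.
rewrite /Q big_ord_recr /= -/(Q k); split.
  apply: sig_setI => //; apply: (sig_mono _ IH1) => v; rewrite /Dle /= => h.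
  apply: (le_trans h); rewrite lez_nat; apply: leq_mul => //.
rewrite (indep (D1 := Dle (k * m)) (D2 := Dgt (k * m))) //; last first.
  by move=> v; rewrite /Dle /Dgt /= => h1 h2; move: (le_lt_trans h1 h2); rewrite ltxx.
rewrite exprSr EFinM A_prob; apply: lee_pmul => //.
by rewrite lee_fin exprn_ge0.
Qed.

End Main.

Definition Good := [set w : T | forall v, 0 <= xi v w].

Definition Fneg (k : nat) : set T :=
  oapp (fun v => xi v @^-1` [set x : R | x < 0]) set0 (unpickle k : option (int * int)).

Lemma Good_meas_P0 : nu [set x : R | x < 0] = 0%E -> measurable Good /\ P (~` Good) = 0%E.
Proof.
move=> hneg.
have e : ~` Good = \bigcup_k Fneg k.
  apply/seteqP; split => w.
  - move=> /= /existsNP [v /negP]; rewrite -ltNge => hv.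
    by exists (pickle v) => //; rewrite /Fneg pickleK.
  - move=> [k _]; rewrite /Fneg; case: (unpickle k) => [v|] //= hv h.
    by move: (h v); rewrite leNgt hv.
have mF : forall k, measurable (Fneg k).
  by move=> k; rewrite /Fneg; case: (unpickle k) => [v|] //=; exact: pre_meas measurable_lt0.
have mU : measurable (\bigcup_k Fneg k) by apply: bigcup_measurable => k _.
split.
  by rewrite -(setCK Good) e; exact: measurableC.
rewrite e; apply: (measure_negligible mU); apply: negligible_bigcup => k.
apply/negligibleP => //; rewrite /Fneg; case: (unpickle k) => [v|] //=.
  by rewrite law //; exact: measurable_lt0.
Qed.

Lemma core_prob (mu C delta : R) (r1 : nat) : 0 <= delta ->
  nu [set x : R | x < 0] = 0%E ->
  (forall r, (r1 < r)%N -> (delta%:E <= P [set w | (LPP xi r w - mu * r%:R > C * (r%:R `^ (1/3)))%R])%E) ->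
  forall (m k r : nat) (tau : R), (r1 < m)%N -> (k * m < r)%N ->
  tau <= k%:R * (mu * m%:R + C * (m%:R `^ (1/3))) ->
  ((delta ^+ k)%:E <= P [set w | (tau <= LPP xi r w)%R])%E.
Proof.
move=> d0 hneg hii m k r tau r1m kmr htau.
have m0 : (0 < m)%N by apply: leq_ltn_trans r1m.
set c' := mu * m%:R + C * (m%:R `^ (1/3)).
have hd : (delta%:E <= P [set w | (c' < LPP xi m w)%R])%E.
  have -> : [set w | (c' < LPP xi m w)%R] = [set w | (LPP xi m w - mu * m%:R > C * (m%:R `^ (1/3)))%R].
    by apply/seteqP; split => w /=; rewrite /c' ltrBrDl addrC.
  exact: hii.
have [_ hQ] := Q_bound m0 d0 hd k.
have [mG PG] := Good_meas_P0 hneg.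
have mQ : measurable (Q m c' k).
  apply: big_ind => //; first by move=> *; exact: measurableI.
  move=> j _; exact: (Vpre_meas _ (@Gm_meas m c')).
have mT : measurable [set w | tau <= LPP xi r w].
  have -> : [set w | tau <= LPP xi r w] = setT `&` LPP xi r @^-1` [set x | tau <= x] by apply/seteqP; split => x //= [].
  have hm := @LPP_meas _ T R xi r mxi; apply: (hm measurableT).
  have -> : [set x : R | tau <= x] = [set` `[tau, +oo[] by apply/seteqP; split => x; rewrite /= in_itv /= andbT.
  exact: measurable_itv.
apply: (le_trans hQ).
rewrite (measureDI P mQ mG).
have h0 : (P (Q m c' k `\` Good) <= 0)%E.
  rewrite -PG; apply: le_measure; rewrite ?inE.
  - exact: measurableD.
  - exact: measurableC.
  - by move=> w [].
apply: (le_trans (leeD h0 (lexx _))).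
rewrite add0e; apply: le_measure; rewrite ?inE //; first exact: measurableI.
move=> w [hQw hGw] /=.
apply: (le_trans htau).
apply: (le_trans _ (LPP_blocks m0 kmr hGw)).
have hA : forall j, (j < k)%N -> c' < LPP (sh (aj m j) xi) m w.
  move=> j jk; move: hQw; rewrite /Q -bigcap_seq => hQw.
  have := hQw (Ordinal jk) (mem_index_enum _).
  by rewrite /A /Gm /preimage /= Phi_V.
rewrite mulr_natl -[in X in X <= _](card_ord k) -sumr_const; apply: ler_sum => j _.
exact/ltW/hA.
Qed.

End Prob.
End Dyn.
Section RA.
Variable R : realType.

Lemma rho3 (x : R) : 0 <= x -> (x `^ (1/3)) ^+ 3 = x.
Proof.
move=> x0; rewrite -powR_mulrn ?powR_ge0 // -powRrM.
by rewrite (_ : 1 / 3 * 3%:R = 1) ?powRr1 //; field.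
Qed.

Lemma rho2 (x : R) : 0 <= x -> x `^ (2/3) = (x `^ (1/3)) ^+ 2.
Proof.
move=> x0; rewrite -powR_mulrn ?powR_ge0 // -powRrM.
by congr (_ `^ _); field.
Qed.

Lemma cube_root_ge (x y : R) : 0 <= y -> y ^+ 3 <= x -> y <= x `^ (1/3).
Proof.
move=> y0 hyx.
have x0 : 0 <= x by apply: le_trans hyx; exact: exprn_ge0.
have := @ge0_ler_powR R (1/3) _ (y ^+ 3) x.
have -> : (y ^+ 3) `^ (1/3) = y.
  by rewrite -powR_mulrn // -powRrM (_ : 3%:R * (1/3) = 1) ?powRr1 //; field.
apply => //.
by rewrite nnegrE exprn_ge0.
Qed.

Lemma pow32 (x : R) : 0 < x -> x `^ (3/2) = x * Num.sqrt x.
Proof.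
move=> x0; rewrite (_ : 3/2 = 1 + 2^-1); last by field.
rewrite powRD; last by apply/implyP => _; rewrite gt_eqF.
by rewrite powRr1 ?ltW // powR12_sqrt ?ltW.
Qed.


Lemma arith1 (C theta t rho : R) : 0 < C -> 0 <= t -> 0 < rho -> C < theta ->
  theta < C * t ^+ 2 * rho ^+ 2 ->
  let s := Num.sqrt (theta / C) in
  [/\ 0 <= s, theta = C * s ^+ 2, 1 <= s & s < t * rho].
Proof.
move=> C0 t0 rho0 hC hth s.
have thC : 0 <= theta / C by apply: divr_ge0; lra.
have s0 : 0 <= s by exact: sqrtr_ge0.
have hs2 : s ^+ 2 = theta / C by rewrite sqr_sqrtr.
have hths : theta = C * s ^+ 2 by rewrite hs2; field; lra.
split => //.
  have : 1 <= s ^+ 2 by rewrite hs2 ler_pdivlMr //; lra.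
  by rewrite (expr_ge1 (n:=2)).
have : s ^+ 2 < (t * rho) ^+ 2.
  have : C * s ^+ 2 < C * (t * rho) ^+ 2 by rewrite -hths exprMn mulrA.
  by rewrite ltr_pM2l.
have tr0 : 0 <= t * rho by rewrite mulr_ge0 // ltW.
by rewrite (ltr_pXn2r (n:=2)) // nnegrE.
Qed.

Lemma arith2 (s t rho : R) (r r1 : nat) : 0 < rho -> 1 <= s -> s < t * rho -> 0 < t -> t <= 1 ->
  216 * (r1.+1)%:R * t <= 1 -> rho ^+ 3 = r%:R ->
  let j := (Num.Def.trunc (2 * s)).+1 in
  [/\ 2 * s < j%:R, j%:R <= 3 * s, (0 < j)%N & (8 * r1.+1 * j ^ 3 <= r)%N].
Proof.
move=> rhop s1 hst t0 t1 htr hrho j.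
have /andP[h1 h2] : ((Num.Def.trunc (2 * s))%:R <= 2 * s < j%:R) by apply: truncn_itv; lra.
have hj3 : j%:R <= 3 * s by move: h1; rewrite /j -natr1; lra.
split => //.
have s0 : 0 <= s by lra.
have rho0 : 0 <= t * rho by lra.
have e1 : j%:R ^+ 3 <= (3 * s) ^+ 3 by apply: lerXn2r; rewrite ?nnegrE //; lra.
have e2 : s ^+ 3 <= (t * rho) ^+ 3 by apply: lerXn2r; rewrite ?nnegrE //; lra.
have e3 : t ^+ 3 <= t.
  rewrite exprS ger_pMr //; rewrite -(expr1n _ 2); apply: lerXn2r; rewrite ?nnegrE //; lra.
have rr : 0 <= r%:R :> R by [].
rewrite -(ler_nat R) !natrM.
have -> : j%:R * (j%:R * j%:R) = j%:R ^+ 3 :> R by rewrite !exprS expr0 mulr1.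
have : j%:R ^+ 3 <= 27 * t * r%:R.
  apply: (le_trans e1); rewrite -hrho.
  have -> : (3 * s) ^+ 3 = 27 * s ^+ 3 by ring.
  have -> : 27 * t * rho ^+ 3 = 27 * (t * rho ^+ 3) by ring.
  rewrite ler_pM2l //; apply: (le_trans e2); rewrite exprMn ler_pM2r //.
  exact: exprn_gt0.
move=> h.
have r8 : (8%:R : R) * (r1.+1)%:R * (27 * t * r%:R) <= r%:R.
  have : (8%:R : R) * (r1.+1)%:R * (27 * t * r%:R) = (216 * (r1.+1)%:R * t) * r%:R.
    by rewrite (_ : (216 : R) = 8 * 27) //; ring.
  by move=> ->; apply: ler_piMl.
apply: le_trans r8; rewrite ler_pM2l // mulr_gt0 // ltr0n.
Qed.

Lemma arith3 (k r r1 : nat) : (0 < k)%N -> (8 * r1.+1 * k <= r)%N ->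
  let m := (r.-1 %/ k)%N in
  [/\ (r1 < m)%N, (k * m < r)%N, (r <= 8 * (k * m))%N & (r <= k * m + k)%N].
Proof.
move=> k0 hk m.
have h1 := leq_trunc_div r.-1 k.
have h2 := ltn_ceil r.-1 k0.
rewrite -/m in h1 h2.
have rpos : (0 < r)%N by apply: leq_trans hk; rewrite !muln_gt0.
have e2 : (r <= k * m + k)%N by move: h2; rewrite mulSn; lia.
have e1 : (k * m < r)%N by move: h1; rewrite mulnC; lia.
have e3 : (8 * r1.+1 <= m.+1)%N.
  rewrite -(leq_pmul2l k0); apply: leq_trans (_ : r <= _)%N; first by rewrite mulnC.
  by rewrite mulnS addnC.
split => //; lia.
Qed.

Lemma arith4 (mu C t rho s e theta : R) (j m r : nat) : 0 < C -> 0 <= t -> 0 < rho -> 0 <= s ->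
  theta = C * s ^+ 2 -> s < t * rho -> 12 * `|mu| * t <= C -> 2 * s < j%:R -> j%:R <= 3 * s ->
  (0 < j)%N -> rho ^+ 3 = r%:R -> (r <= 8 * (j ^ 3 * m))%N -> (j ^ 3 * m <= r)%N -> (r <= j ^ 3 * m + j ^ 3)%N ->
  e <= mu * r%:R ->
  e + theta * rho <= (j ^ 3)%:R * (mu * m%:R + C * m%:R `^ (1/3)).
Proof.
move=> C0 t0 rho0 s0 hth hst htC hj1 hj2 j0 hrho h8 hkm1 hkm2 he.
set M := `|mu|.
have M0 : 0 <= M by exact: normr_ge0.
have jR : 0 < j%:R :> R by rewrite ltr0n.
set k := (j ^ 3)%N.
have hk : k%:R = j%:R ^+ 3 :> R by rewrite natrX.
set y := rho / (2 * j%:R).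
have y0 : 0 <= y by apply: divr_ge0; lra.
have hy : y <= m%:R `^ (1/3).
  apply: cube_root_ge => //.
  have -> : y ^+ 3 = r%:R / (8 * k%:R) by rewrite /y hk -hrho; field; lra.
  rewrite ler_pdivrMr; last by rewrite hk; apply: mulr_gt0 => //; exact: exprn_gt0.
  rewrite (_ : m%:R * (8 * k%:R) = (8 * (k * m))%:R :> R); first by rewrite ler_nat.
  by rewrite !natrM; ring.
have e1 : C * j%:R ^+ 2 * rho / 2 <= k%:R * C * m%:R `^ (1/3).
  have -> : C * j%:R ^+ 2 * rho / 2 = k%:R * C * y by rewrite /y hk; field; lra.
  rewrite ler_pM2l //; apply: mulr_gt0 => //; rewrite hk; exact: exprn_gt0.
have hrk : (0 <= r%:R - k%:R * m%:R :> R) && (r%:R - k%:R * m%:R <= k%:R :> R).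
  have hkmR : k%:R * m%:R <= r%:R :> R by rewrite -natrM ler_nat.
  have hrR : r%:R <= k%:R * m%:R + k%:R :> R by rewrite -natrM -natrD ler_nat.
  apply/andP; split; lra.
have e2 : mu * r%:R <= mu * (k%:R * m%:R) + M * k%:R.
  have : mu * (r%:R - k%:R * m%:R) <= M * k%:R.
    move/andP: hrk => [a b].
    apply: (le_trans (ler_wpM2r a (ler_norm mu))).
    exact: ler_wpM2l.
  rewrite mulrBr; lra.
have e3 : 4 * M * j%:R <= C * rho.
  have a1 : 4 * M * j%:R <= 12 * M * s.
    have : M * j%:R <= M * (3 * s) by exact: ler_wpM2l.
    lra.
  have a2 : 12 * M * s <= 12 * M * (t * rho).
    by apply: ler_wpM2l; [apply: mulr_ge0 => //; lra|exact: ltW].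
  have a3 : 12 * M * (t * rho) <= C * rho by rewrite mulrA ler_pM2r.
  lra.
have e4 : M * k%:R <= C * j%:R ^+ 2 * rho / 4.
  have : j%:R ^+ 2 / 4 * (4 * M * j%:R) <= j%:R ^+ 2 / 4 * (C * rho).
    by apply: ler_wpM2l => //; apply: divr_ge0 => //; exact: exprn_ge0.
  have -> : j%:R ^+ 2 / 4 * (4 * M * j%:R) = M * k%:R by rewrite hk; field.
  by have -> : j%:R ^+ 2 / 4 * (C * rho) = C * j%:R ^+ 2 * rho / 4 by field.
have e5 : theta * rho <= C * j%:R ^+ 2 * rho / 4.
  rewrite hth.
  have : (2 * s) ^+ 2 <= j%:R ^+ 2 by apply: lerXn2r; rewrite ?nnegrE; lra.
  move=> h.
  have : C * rho / 4 * (2 * s) ^+ 2 <= C * rho / 4 * j%:R ^+ 2.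
    by apply: ler_wpM2l => //; apply: divr_ge0 => //; apply: mulr_ge0; lra.
  have -> : C * rho / 4 * (2 * s) ^+ 2 = C * s ^+ 2 * rho by field.
  by have -> : C * rho / 4 * j%:R ^+ 2 = C * j%:R ^+ 2 * rho / 4 by field.
have -> : k%:R * (mu * m%:R + C * m%:R `^ (1/3)) = mu * (k%:R * m%:R) + k%:R * C * m%:R `^ (1/3) by ring.
lra.
Qed.

Lemma arith5 (C delta theta s : R) (j : nat) : 0 < C -> 0 < delta -> delta <= 1 -> 0 <= s ->
  theta = C * s ^+ 2 -> 0 < theta -> j%:R <= 3 * s ->
  expR (- ((27 * - ln delta / (C * Num.sqrt C) + 1) * theta `^ (3/2))) <= delta ^+ (j ^ 3).
Proof.
move=> C0 d0 d1 s0 hth th0 hj.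
have hk : (j ^ 3)%:R <= 27 * s ^+ 3 :> R.
  rewrite natrX; have -> : 27 * s ^+ 3 = (3 * s) ^+ 3 by ring.
  by apply: lerXn2r; rewrite ?nnegrE //; lra.
have -> : delta ^+ (j ^ 3) = expR ((j ^ 3)%:R * ln delta) by rewrite expRM_natl lnK.
rewrite ler_expR pow32 //.
have sC : 0 < Num.sqrt C by rewrite sqrtr_gt0.
have hsq : Num.sqrt theta = Num.sqrt C * s.
  by rewrite hth sqrtrM ?ltW // sqrtr_sqr ger0_norm.
rewrite hsq.
have -> : (27 * - ln delta / (C * Num.sqrt C) + 1) * (theta * (Num.sqrt C * s)) =
  27 * (- ln delta) * s ^+ 3 + C * Num.sqrt C * s ^+ 3.
  rewrite hth; field; apply/andP; split; rewrite gt_eqF //.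
have l0 : ln delta <= 0 by exact: ln_le0.
have : (j ^ 3)%:R * ln delta >= 27 * s ^+ 3 * ln delta by rewrite ler_wnM2r.
have : 0 <= C * Num.sqrt C * s ^+ 3 by rewrite mulr_ge0 ?exprn_ge0 // mulr_ge0 // ltW.
lra.
Qed.
End RA.

Unset Implicit Arguments.

Theorem theorem2 (d : measure_display) (T : measurableType d) (R : realType)
  (P : probability T R) (nu : probability R R) (xi : int * int -> T -> R) (mu : R) :
  (forall v, measurable_fun setT (xi v)) ->
  mutually_independent P xi ->
  (forall v (B : set R), measurable B -> P (xi v @^-1` B) = nu B) ->
  nu [set x : R | x < 0] = 0%E ->
  ((fun r : nat => ('E_P[LPP xi r] * ((r%:R)^-1)%:E)%E) @ \oo --> mu%:E) ->
  (exists g1 g2 : R, 0 < g1 /\ 0 < g2 /\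
     \forall r \near \oo,
       ((mu * r%:R - g1 * (r%:R `^ (1/3)))%:E <= 'E_P[LPP xi r] <=
        (mu * r%:R - g2 * (r%:R `^ (1/3)))%:E)%E) ->
  (exists (delta C : R) (r1 : nat), 0 < delta /\ 0 < C /\
     forall r : nat, (r1 < r)%N ->
       (delta%:E <= P [set w | (LPP xi r w - mu * r%:R > C * (r%:R `^ (1/3)))%R])%E) ->
  exists (c eta theta0 : R) (r0 : nat), 0 < c /\ 0 < eta /\
    forall (r : nat) (theta : R), (r0 < r)%N ->
      theta0 < theta -> theta < eta * (r%:R `^ (2/3)) ->
      ((expR (- (c * theta `^ (3/2))))%:E <=
        P [set w | (LPP xi r w - fine 'E_P[LPP xi r] >= theta * (r%:R `^ (1/3)))%R])%E.
Proof.
move=> mxi ind law hneg _ [g1 [g2 [g10 [g20 hE]]]] [delta [C [r1 [d0 [C0 hii]]]]].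
case: hE => N _ hN.
have d1 : delta <= 1.
  have := hii r1.+1 (ltnSn _) => h.
  have : (delta%:E <= 1)%E.
    apply: (le_trans h); apply: probability_le1.
    have -> : [set w | (C * r1.+1%:R `^ (1 / 3) < LPP xi r1.+1 w - mu * r1.+1%:R)%R] =
      setT `&` (fun w => LPP xi r1.+1 w - mu * r1.+1%:R) @^-1` [set x | C * r1.+1%:R `^ (1 / 3) < x].
      by apply/seteqP; split => w //= [].
    apply: (measurable_realfun.measurable_funB (LPP_meas _ mxi) (measurable_cst _) measurableT).
    exact: measurable_gt.
  by rewrite lee_fin.
set M := `|mu|.
set t := Num.min 1 (Num.min (C / (12 * M + 1)) (1 / (216 * (r1.+1)%:R))).
have M0 : 0 <= M by exact: normr_ge0.
have t0 : 0 < t.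
  have a1 : 0 < C / (12 * M + 1).
  have h12 : 0 < 12 * M + 1 by lra.
  exact: (divr_gt0 C0 h12).
  have h216 : 0 < 216 * (r1.+1)%:R :> R by rewrite mulr_gt0 // ltr0n.
  have a2 : 0 < 1 / (216 * (r1.+1)%:R) := divr_gt0 ltr01 h216.
  by rewrite /t !lt_min ltr01 a1 a2.
have t1 : t <= 1 by rewrite /t ge_min lexx.
have tC : 12 * M * t <= C.
  have : t <= C / (12 * M + 1) by rewrite /t !ge_min lexx orbT.
  rewrite ler_pdivlMr; last by lra.
  nra.
have tr : 216 * (r1.+1)%:R * t <= 1.
  have : t <= 1 / (216 * (r1.+1)%:R) by rewrite /t !ge_min lexx !orbT.
  rewrite ler_pdivlMr; last by rewrite mulr_gt0 // ltr0n.
  by rewrite mulrC.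
exists (27 * (- ln delta) / (C * Num.sqrt C) + 1), (C * t ^+ 2), C, N.+1.
split.
  have : 0 <= 27 * (- ln delta) / (C * Num.sqrt C).
    apply: divr_ge0; last by apply: mulr_ge0; [exact: ltW|exact: sqrtr_ge0].
    apply: mulr_ge0 => //; rewrite oppr_ge0; exact: ln_le0.
  lra.
split; first by apply: mulr_gt0 => //; exact: exprn_gt0.
move=> r theta hr hth0 hth.
have hrN : (N <= r)%N by apply: leq_trans (leqnSn N) (ltnW hr).
have /andP[hE1 hE2] := hN r hrN.
move: hE1 hE2; set E := ('E_P[LPP xi r])%E; clearbody E.
case: E => [e| |] //=.
rewrite !lee_fin => hE1 hE2.
have rpos : (0 < r)%N by apply: leq_ltn_trans hr.
have r0 : 0 < r%:R :> R by rewrite ltr0n.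
set rho := r%:R `^ (1/3).
have rho0 : 0 < rho by apply: powR_gt0.
have hrho3 : rho ^+ 3 = r%:R by rewrite rho3 // ltW.
move: hth; rewrite (rho2 (ltW r0)) -/rho => hth.
have [s0 hths hs1 hst] := arith1 C0 (ltW t0) rho0 hth0 hth.
move: s0 hths hs1 hst; set s := Num.sqrt (theta / C) => s0 hths hs1 hst.
have [hj1 hj2 hj0 hjr] := arith2 rho0 hs1 hst t0 t1 tr hrho3.
move: hj1 hj2 hj0 hjr; set j := (Num.Def.trunc (2 * s)).+1 => hj1 hj2 hj0 hjr.
have k0 : (0 < j ^ 3)%N by rewrite expn_gt0 hj0.
have [r1m kmr h8 hkm2] := arith3 k0 hjr.
move: r1m kmr h8 hkm2; set m := (r.-1 %/ j ^ 3)%N => r1m kmr h8 hkm2.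
have he : e <= mu * r%:R.
  apply: (le_trans hE2); rewrite lerBlDr lerDl; apply: mulr_ge0; [exact: ltW|exact: powR_ge0].
have htau := arith4 C0 (ltW t0) rho0 s0 hths hst tC hj1 hj2 hj0 hrho3 h8 (ltnW kmr) hkm2 he.
have hP := core_prob mxi ind law (ltW d0) hneg hii r1m kmr htau.
have -> : [set w | (theta * rho <= LPP xi r w - e)%R] = [set w | (e + theta * rho <= LPP xi r w)%R].
  by apply/seteqP; split => w /=; rewrite lerBrDl addrC.
apply: (le_trans _ hP); rewrite lee_fin.
have th0 : 0 < theta by apply: lt_trans hth0.
exact: (arith5 C0 d0 d1 s0 hths th0 hj2).
Qed.
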